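(* Let $q$ be a prime power and let $\mathcal{C}_{\mathsf{out}}$ be an $[n_{\mathsf{out}},k_{\mathsf{out}}]$ linear code over $\mathbb{F}_q$ with generator matrix $\mathbf{G}_{\mathsf{out}}\in\mathbb{F}_q^{k_{\mathsf{out}}\times n_{\mathsf{out}}}$, and let $\mathbb{I}_{\mathsf{out}}$ be the set of its information sets. Let $k_{\mathsf{in}}\leq k_{\mathsf{out}}\leq s$, let $\mathbf{g}\in\mathbb{F}_{q^s}^{k_{\mathsf{out}}}$ have entries linearly independent over $\mathbb{F}_q$, and let $\mathbf{G}_{\mathsf{in}}$ be the generator matrix of the Gabidulin code $\mathcal{C}_{\mathsf{in}}=\mathsf{Gab}(k_{\mathsf{out}},k_{\mathsf{in}},\mathbf{g})$ over $\mathbb{F}_{q^s}$. Then for every $\mathcal{I}\in\mathbb{I}_{\mathsf{out}}$, the code obtained from the row span of $\mathbf{G}_{\mathsf{in}}\cdot\mathbf{G}_{\mathsf{out}}$ by restricting every codeword to the positions in $\mathcal{I}$ is a Gabidulin code $\mathsf{Gab}(k_{\mathsf{out}},k_{\mathsf{in}},\mathbf{g}')$ over $\mathbb{F}_{q^s}$ for some $\mathbf{g}'\in\mathbb{F}_{q^s}^{k_{\mathsf{out}}}$ with entries linearly independent over $\mathbb{F}_q$.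
   Context: An information set of an $[N,k]$ linear code $\mathcal{C}$ is a set $\mathcal{I}\subseteq[N]$ with $|\mathcal{I}|=k$ such that the restriction of $\mathcal{C}$ to the coordinates in $\mathcal{I}$ has dimension $k$. Gabidulin code: for $\mathbf{g}=(g_1,\dots,g_N)\in\mathbb{F}_{q^s}^N$ with $g_i$ linearly independent over $\mathbb{F}_q$, $\mathsf{Gab}(N,k,\mathbf{g})$ is the $[N,k]$ code over $\mathbb{F}_{q^s}$ spanned by the rows of the $k\times N$ matrix whose $(i,j)$ entry is $g_j^{q^{i-1}}$ (this matrix is called its generator matrix). *)

(* Defs.v *)
From HB Require Import structures.
From mathcomp Require Import all_boot all_order all_algebra all_field.
Set Implicit Arguments. Unset Strict Implicit. Unset Printing Implicit Defensive.
Import GRing.Theory.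
Local Open Scope ring_scope.

(* Column-selection matrix: the n x k 0/1 matrix picking the coordinates in I,
   in increasing order (enum I is increasing for ordinals). *)
Definition sel_mx (R : pzSemiRingType) (n k : nat) (I : {set 'I_n}) : 'M[R]_(n, k) :=
  \matrix_(i < n, j < k) ((i \in I) && (index i (enum I) == j :> nat))%:R.

Definition restrict_cols (R : pzSemiRingType) (m n k : nat) (I : {set 'I_n})
  (M : 'M[R]_(m, n)) : 'M[R]_(m, k) := M *m sel_mx R k I.

Definition is_info_set (F : fieldType) (k n : nat) (G : 'M[F]_(k, n)) (I : {set 'I_n}) :=
  (#|I| == k) && (\rank (restrict_cols k I G) == k)%N.

Definition F_lin_indep (F : fieldType) (L : fieldExtType F) (N : nat) (g : 'rV[L]_N) :=
  free [seq g 0 j | j <- enum 'I_N].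

(* Generator matrix of Gab(N,k,g): (i,j) entry g_j^(q^i) (0-indexed i). *)
Definition gab_mx (L : fieldType) (q k N : nat) (g : 'rV[L]_N) : 'M[L]_(k, N) :=
  \matrix_(i < k, j < N) (g 0 j) ^+ (q ^ i).

(* Main.v *)
Require Import Defs.
From HB Require Import structures.
From mathcomp Require Import all_boot all_order all_algebra all_field.
From mathcomp Require Import abelian pgroup.
Local Open Scope ring_scope.
Import GRing.Theory.

Lemma card_pnat (F : finFieldType) (L : fieldExtType F) i :
  [pchar L].-nat (#|F| ^ i)%N.
Proof.
have [p pr_p pF] := finPcharP F.
have hab := fin_ring_pchar_abelem pF.
have pg := abelem_pgroup hab.
rewrite /pgroup cardsT in pg.
rewrite pnatX; apply/orP; left; apply: sub_in_pnat pg => r _.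
by rewrite inE => /eqP ->; rewrite (pchar_lalg L).
Qed.

Lemma span_mul (F : fieldType) (L : fieldExtType F) k (h : 'rV[L]_k) (B : 'M[F]_k) :
  (<<[seq (h *m map_mx (GRing.in_alg L) B) (0%R : 'I_1) j | j <- enum 'I_k]>>
     <= <<[seq h (0%R : 'I_1) j | j <- enum 'I_k]>>)%VS.
Proof.
apply/span_subvP => v /mapP [j _ ->]; rewrite mxE; apply: rpred_sum => l _.
rewrite mxE /= mulr_algr; apply: rpredZ; apply: memv_span.
by apply: map_f; rewrite mem_enum.
Qed.

Theorem lemma2 (F : finFieldType) (L : fieldExtType F) (s k_in k_out n_out : nat)
  (G_out : 'M[F]_(k_out, n_out)) (g : 'rV[L]_k_out) (I : {set 'I_n_out}) :
  \dim (fullv : {vspace L}) = s ->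
  (k_in <= k_out)%N -> (k_out <= s)%N ->
  row_free G_out ->
  F_lin_indep g ->
  is_info_set G_out I ->
  exists g' : 'rV[L]_k_out,
    F_lin_indep g' /\
    (restrict_cols k_out I (gab_mx #|F| k_in g *m map_mx (GRing.in_alg L) G_out)
       == gab_mx #|F| k_in g')%MS.
Proof.
move=> _ _ _ _ freeg /andP [_ rkA].
set q := #|F|.
set A := restrict_cols k_out I G_out.
have Au : A \in unitmx by rewrite -row_free_unit /row_free.
pose g' := g *m map_mx (GRing.in_alg L) A.
exists g'; split.
  rewrite /F_lin_indep /free size_map.
  move: freeg; rewrite /F_lin_indep /free size_map => /eqP <-; apply/eqP.
  congr (\dim _); apply/subv_anti/andP; split; first exact: span_mul.
  have -> : g = g' *m map_mx (GRing.in_alg L) (invmx A).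
    by rewrite /g' -mulmxA -map_mxM mulmxV // map_mx1 mulmx1.
  exact: span_mul.
have frobD i : {morph (fun x : L => x ^+ (q ^ i)) : x y / x + y}.
  by move=> x y /=; rewrite exprDn_pchar // card_pnat.
have frob0 i : (0 : L) ^+ (q ^ i) = 0.
  rewrite expr0n expn_eq0 eqn0Ngt (ltnW (finNzRing_gt1 F)) /=. by [].
have fixF i (a : F) : (GRing.in_alg L a) ^+ (q ^ i) = GRing.in_alg L a.
  rewrite -rmorphXn; congr (GRing.in_alg L _).
  elim: i => [|i IH]; first by rewrite expr1.
  by rewrite expnSr exprM IH expf_card.
have -> : restrict_cols k_out I (gab_mx q k_in g *m map_mx (GRing.in_alg L) G_out)
    = gab_mx q k_in g'.
  rewrite /restrict_cols -mulmxA.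
  have -> : sel_mx L k_out I = map_mx (GRing.in_alg L) (sel_mx F k_out I).
    by apply/matrixP => i j; rewrite !mxE rmorph_nat.
  rewrite -map_mxM -/(restrict_cols k_out I G_out) -/A.
  apply/matrixP => i j; rewrite !mxE.
  rewrite (big_morph _ (frobD i) (frob0 i)); apply: eq_bigr => l _.
  by rewrite !mxE exprMn fixF.
exact/eqmxP/eqmx_refl.
Qed.
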